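(* Assume $a_j\ge0$ for all $j$. Let $M>0$, $\ell\ge0$, let $x\in X_{<M}$, and let $v\in\Lambda_x\setminus\{0\}$ satisfy $\|va^n\|\le 1/M$ for all $n\in\{1,\dots,\ell+1\}$. For each $j$ define $s_j\in[-\infty,\infty]$ by $|v_j''|=|v_j'|e^{s_j}$, and let $\mathcal L=\{j:s_j\le0\}$, $\mathcal C=\{j:0<s_j\le(\ell+1)a_j\}$, $\mathcal R=\{j:s_j>(\ell+1)a_j\}$. Then $$(\ell+1)\Bigl(\sum_{j\in\mathcal L}a_j\delta_j+\sum_{j\in\mathcal C}a_j\delta_j-\sum_{j\in\mathcal R}a_j\delta_j\Bigr)<2\sum_{j\in\mathcal C}s_j\delta_j.$$
   Context: Setup. Let $F$ be an algebraic number field with ring of integers $\mathcal O$, real embeddings $\sigma_1,\dots,\sigma_r$ and complex embeddings $\sigma_{r+1},\dots,\sigma_{r+s}$ (one from each conjugate pair). Let $G=\prod_{j=1}^r\mathrm{SL}_2(\mathbb R)\times\prod_{j=1}^s\mathrm{SL}_2(\mathbb C)$ and $\Gamma=\mathrm{SL}_2(\mathcal O)$, embedded in $G$ via $\gamma\mapsto(\sigma_1(\gamma),\dots,\sigma_{r+s}(\gamma))$ (entrywise); $X=\Gamma\backslash G$. Fix a diagonal element $a=\bigl(\mathrm{diag}(e^{i\theta_j}e^{a_j/2},e^{-i\theta_j}e^{-a_j/2})\bigr)_{j=1}^{r+s}\in G$ with $a_j\in\mathbb R$, $\theta_j\in[0,2\pi]$, $\theta_1=\dots=\theta_r=0$.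 Set $\delta_j=1$ for $j\le r$, $\delta_j=2$ for $j>r$. Vectors in $(\mathbb R^2)^r\times(\mathbb C^2)^s$ are written $v=(v_1',v_1'')\times\cdots\times(v_{r+s}',v_{r+s}'')$; $\mathcal O$ acts by $\lambda\cdot v=(\sigma_j(\lambda)v_j',\sigma_j(\lambda)v_j'')_j$, $G$ acts on the right componentwise (row vector times matrix), so $va^n$ has components $(v_j'e^{in\theta_j}e^{na_j/2},\,v_j''e^{-in\theta_j}e^{-na_j/2})$. A point $x=\Gamma g$ is identified with the $\mathcal O$-module $\Lambda_x$ generated by the two rows of $g$. Define $|(v_j',v_j'')|=\max\{|v_j'|,|v_j''|\}$, $\|v\|=\prod_j|(v_j',v_j'')|^{\delta_j}$, $\mathrm{ht}(x)=\max\{\|v\|^{-1}:v\in\Lambda_x\setminus\{0\}\}$, $X_{<M}=\{x:\mathrm{ht}(x)<M\}$. *)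

(* Defs.v *)
(* The number field F is a MathComp [fieldExtType rat]
   (finite-dimensional field extension of Q); everything analytic (the group G,
   exponentials, norms, heights) is done with Stdlib's real numbers R,
   with complex numbers modelled as pairs of reals. *)
From Stdlib Require Import Reals.
From HB Require Import structures.
From mathcomp Require Import all_boot all_order all_algebra all_field.

Set Implicit Arguments.
Unset Strict Implicit.
Unset Printing Implicit Defensive.

Record CC := mkCC { cre : R ; cim : R }.

Local Open Scope R_scope.

Definition C0 : CC := mkCC 0 0.
Definition C1 : CC := mkCC 1 0.
Definition Cadd (z w : CC) : CC := mkCC (cre z + cre w) (cim z + cim w).
Definition Cmul (z w : CC) : CC :=
  mkCC (cre z * cre w - cim z * cim w) (cre z * cim w + cim z * cre w).
Definition Cconj (z : CC) : CC := mkCC (cre z) (- cim z).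
Definition Cmod (z : CC) : R := sqrt (cre z ^ 2 + cim z ^ 2).
Definition Creal (x : R) : CC := mkCC x 0.
Definition Cexpi (t : R) : CC := mkCC (cos t) (sin t).

Definition ring_emb (L : fieldExtType rat) (f : L -> CC) : Prop :=
  f (GRing.one L) = C1 /\
  (forall x y : L, f (GRing.add x y) = Cadd (f x) (f y)) /\
  (forall x y : L, f (GRing.mul x y) = Cmul (f x) (f y)).

(* sigma 0, ..., sigma (r-1) are the real embeddings and sigma r, ...,
   sigma (r+s-1) are the complex (non-real) embeddings, one from each
   conjugate pair; every embedding F -> C is one of them or the complex
   conjugate of one of them, and they are pairwise distinct up to conjugation.
   (Indices are 0-based: paper's j = 1..r+s is j = 0..r+s-1 here.) *)
Definition number_field_embeddings (L : fieldExtType rat) (r s : nat)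
    (sigma : nat -> L -> CC) : Prop :=
  (forall j, (j < r + s)%N -> ring_emb (sigma j)) /\
  (forall j, (j < r)%N -> forall x : L, cim (sigma j x) = 0) /\
  (forall j, (r <= j)%N -> (j < r + s)%N -> exists x : L, cim (sigma j x) <> 0) /\
  (forall i j, (i < r + s)%N -> (j < r + s)%N -> i <> j ->
     (exists x : L, sigma i x <> sigma j x) /\
     (exists x : L, sigma i x <> Cconj (sigma j x))) /\
  (forall f : L -> CC, ring_emb f ->
     exists j, (j < r + s)%N /\
       ((forall x, f x = sigma j x) \/ (forall x, f x = Cconj (sigma j x)))).

Definition in_O (L : fieldExtType rat) (x : L) : Prop :=
  integralOver (fun z : int => (z%:~R)%R : L) x.

Record M2 := mkM2 { m11 : CC ; m12 : CC ; m21 : CC ; m22 : CC }.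

Definition M2det (m : M2) : CC :=
  Cadd (Cmul (m11 m) (m22 m)) (Cmul (Creal (-1)) (Cmul (m12 m) (m21 m))).

Definition M2real (m : M2) : Prop :=
  cim (m11 m) = 0 /\ cim (m12 m) = 0 /\ cim (m21 m) = 0 /\ cim (m22 m) = 0.

Definition in_G (r s : nat) (g : nat -> M2) : Prop :=
  (forall j, (j < r + s)%N -> M2det (g j) = C1) /\
  (forall j, (j < r)%N -> M2real (g j)).

(* v j = (v_j', v_j'') *)
Definition vec := nat -> (CC * CC)%type.

Definition vmul (u : CC * CC) (m : M2) : CC * CC :=
  (Cadd (Cmul u.1 (m11 m)) (Cmul u.2 (m21 m)),
   Cadd (Cmul u.1 (m12 m)) (Cmul u.2 (m22 m))).

Definition vact (v : vec) (g : nat -> M2) : vec := fun j => vmul (v j) (g j).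

Definition vec_nonzero (n : nat) (v : vec) : Prop :=
  exists j, (j < n)%N /\ v j <> (C0, C0).

(* Lambda_x for x = Gamma g: the O-module generated by the two rows of g,
   O acting through the embeddings. *)
Definition in_Lambda (L : fieldExtType rat) (r s : nat) (sigma : nat -> L -> CC)
    (g : nat -> M2) (v : vec) : Prop :=
  exists alpha beta : L, in_O alpha /\ in_O beta /\
    forall j, (j < r + s)%N ->
      v j = (Cadd (Cmul (sigma j alpha) (m11 (g j))) (Cmul (sigma j beta) (m21 (g j))),
             Cadd (Cmul (sigma j alpha) (m12 (g j))) (Cmul (sigma j beta) (m22 (g j)))).

Definition rsum (n : nat) (f : nat -> R) : R := foldr Rplus 0 (map f (iota 0 n)).
Definition rprod (n : nat) (f : nat -> R) : R := foldr Rmult 1 (map f (iota 0 n)).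

Definition delta (r j : nat) : nat := if (j < r)%N then 1%N else 2%N.

Definition pnorm (u : CC * CC) : R := Rmax (Cmod u.1) (Cmod u.2).
Definition vnorm (r s : nat) (v : vec) : R :=
  rprod (r + s) (fun j => pnorm (v j) ^ delta r j).

Definition is_height (L : fieldExtType rat) (r s : nat) (sigma : nat -> L -> CC)
    (g : nat -> M2) (h : R) : Prop :=
  (exists w, in_Lambda r s sigma g w /\ vec_nonzero (r + s) w /\ / vnorm r s w = h) /\
  (forall w, in_Lambda r s sigma g w -> vec_nonzero (r + s) w -> / vnorm r s w <= h).

Definition in_X_lt (L : fieldExtType rat) (r s : nat) (sigma : nat -> L -> CC)
    (g : nat -> M2) (M : R) : Prop :=
  exists h, is_height r s sigma g h /\ h < M.

Definition a_elt (aa th : nat -> R) : nat -> M2 := fun j =>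
  mkM2 (Cmul (Cexpi (th j)) (Creal (exp (aa j / 2)))) C0
       C0 (Cmul (Cexpi (- th j)) (Creal (exp (- (aa j / 2))))).

Definition theta_ok (r s : nat) (th : nat -> R) : Prop :=
  (forall j, (j < r + s)%N -> 0 <= th j <= 2 * PI) /\
  (forall j, (j < r)%N -> th j = 0).

Definition vpow (v : vec) (g : nat -> M2) (n : nat) : vec := iter n (fun w => vact w g) v.

Inductive ER := ERfin (x : R) | ERpinf | ERminf.

(* |v''| = |v'| e^{s} with s in [-oo, +oo] (e^{+oo} = +oo, e^{-oo} = 0):
   s finite iff both are nonzero (s = log(|v''|/|v'|)); s = +oo iff v' = 0 <> v'';
   s = -oo iff v'' = 0 <> v'. *)
Definition s_spec (n1 n2 : R) (x : ER) : Prop :=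
  match x with
  | ERfin y => 0 < n1 /\ n2 = n1 * exp y
  | ERpinf => n1 = 0 /\ 0 < n2
  | ERminf => 0 < n1 /\ n2 = 0
  end.

(* L = {s <= 0}, C = {0 < s <= t}, R = {s > t}, with t = (l+1) a_j *)
Definition in_Lset (x : ER) : bool :=
  match x with
  | ERminf => true
  | ERfin y => if Rle_dec y 0 then true else false
  | ERpinf => false
  end.
Definition in_Cset (t : R) (x : ER) : bool :=
  match x with
  | ERfin y => if Rlt_dec 0 y then (if Rle_dec y t then true else false) else false
  | _ => false
  end.
Definition in_Rset (t : R) (x : ER) : bool :=
  match x with
  | ERpinf => true
  | ERfin y => if Rlt_dec t y then true else false
  | ERminf => false
  end.
(* value of a finite extended real (only used on C, where s_j is finite) *)
Definition ER_val (x : ER) : R := match x with ERfin y => y | _ => 0 end.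

(* Main.v *)
Require Import Defs.
From Stdlib Require Import Reals Lra.
From HB Require Import structures.
From mathcomp Require Import all_boot all_order all_algebra all_field.

Local Open Scope R_scope.

Lemma exple x y : x <= y -> exp x <= exp y.
Proof. intros H; destruct (Rle_lt_or_eq_dec _ _ H) as [h|h]; [left; now apply exp_increasing| subst; lra]. Qed.

Lemma Cmod_add0r z y : Cmod (Cadd z (Cmul y C0)) = Cmod z.
Proof. unfold Cmod, Cadd, Cmul, C0; simpl. f_equal; ring. Qed.
Lemma Cmod_add0l z y : Cmod (Cadd (Cmul y C0) z) = Cmod z.
Proof. unfold Cmod, Cadd, Cmul, C0; simpl. f_equal; ring. Qed.

Lemma Cmod_rot x t e : 0 <= e -> Cmod (Cmul x (Cmul (Cexpi t) (Defs.Creal e))) = Cmod x * e.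
Proof.
intros He. unfold Cmod, Cmul, Cexpi, Defs.Creal; cbn [cre cim].
assert (H1 := sin2_cos2 t). unfold Rsqr in H1.
replace ((cre x * (cos t * e - sin t * 0) - cim x * (cos t * 0 + sin t * e)) ^ 2 +
   (cre x * (cos t * 0 + sin t * e) + cim x * (cos t * e - sin t * 0)) ^ 2)
 with ((cre x ^ 2 + cim x ^ 2) * (e ^ 2) * (sin t * sin t + cos t * cos t)) by ring.
rewrite H1 Rmult_1_r sqrt_mult; [|nra|nra]. rewrite sqrt_pow2; lra.
Qed.

Lemma Cmod_ge0 z : 0 <= Cmod z.
Proof. apply sqrt_pos. Qed.

Lemma vpow_j v aa th n j :
  vpow v (a_elt aa th) n j = iter n (fun u => vmul u (a_elt aa th j)) (v j).
Proof. induction n as [|n IH]; simpl; [reflexivity|]. unfold vact. now rewrite IH. Qed.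

Lemma vpow_mod v aa th n j :
  Cmod (vpow v (a_elt aa th) n j).1 = Cmod (v j).1 * exp (INR n * aa j / 2) /\
  Cmod (vpow v (a_elt aa th) n j).2 = Cmod (v j).2 * exp (- (INR n * aa j / 2)).
Proof.
rewrite vpow_j. induction n as [|n [IH1 IH2]].
- simpl. rewrite !Rmult_0_l. unfold Rdiv. rewrite Rmult_0_l Ropp_0 exp_0. lra.
- change (iter n.+1 ?f ?x) with (f (iter n f x)). rewrite S_INR. unfold vmul, a_elt; cbn [fst snd m11 m12 m21 m22].
  rewrite Cmod_add0r Cmod_add0l !Cmod_rot; try (left; apply exp_pos).
  rewrite IH1 IH2. split.
  + rewrite Rmult_assoc -exp_plus. f_equal; f_equal; field.
  + rewrite Rmult_assoc -exp_plus. f_equal; f_equal; field.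
Qed.

Lemma cmp c x y : 0 <= c -> x <= y -> c * exp x <= c * exp y.
Proof. intros; apply Rmult_le_compat_l; auto; now apply exple. Qed.

Lemma rmax_exp c u w : 0 <= c -> Rmax (c * exp u) (c * exp w) = c * exp (Rmax u w).
Proof.
intros Hc. unfold Rmax. destruct (Rle_dec (c * exp u) (c * exp w)) as [h1|h1];
 destruct (Rle_dec u w) as [h2|h2]; auto.
- apply Rle_antisym; auto. apply cmp; lra.
- exfalso; apply h1, cmp; lra.
Qed.

Lemma step_j (c1 c2 a T : R) (x : ER) : 0 <= c1 -> 0 <= c2 -> 0 <= a -> 0 < T ->
  s_spec c1 c2 x ->
  Rmax (c1 * exp (T * a / 2)) (c2 * exp (- (T * a / 2))) =
  Rmax c1 c2 * exp (T / 2 * ((if in_Lset x then a else 0) + (if in_Cset (T * a) x then a else 0)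
      - (if in_Rset (T * a) x then a else 0)) - (if in_Cset (T * a) x then ER_val x else 0)).
Proof.
intros h1 h2 ha hT. assert (hTa : 0 <= T * a) by nra.
destruct x as [y| |]; simpl.
- intros [hc ->].
  assert (E1: Rmax c1 (c1 * exp y) = c1 * exp (Rmax 0 y)).
  { rewrite <- rmax_exp; [rewrite exp_0 Rmult_1_r|]; lra. }
  assert (E2: Rmax (c1 * exp (T * a / 2)) (c1 * exp y * exp (- (T * a / 2)))
            = c1 * exp (Rmax (T * a / 2) (y + - (T * a / 2)))).
  { rewrite <- rmax_exp; [|lra]. now rewrite Rmult_assoc exp_plus. }
  rewrite E1 E2 Rmult_assoc -exp_plus. f_equal. f_equal.
  unfold Rmax.
  destruct (Rle_dec y 0); destruct (Rlt_dec 0 y); destruct (Rle_dec y (T * a));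
   destruct (Rlt_dec (T * a) y); destruct (Rle_dec 0 y);
   destruct (Rle_dec (T * a / 2) (y + - (T * a / 2))); simpl; lra.
- intros [-> hc]. rewrite Rmult_0_l.
  rewrite Rmax_right; [|left; apply Rmult_lt_0_compat; auto; apply exp_pos].
  rewrite Rmax_right; [|lra]. f_equal. f_equal. lra.
- intros [hc ->]. rewrite Rmult_0_l.
  rewrite Rmax_left; [|left; apply Rmult_lt_0_compat; auto; apply exp_pos].
  rewrite Rmax_left; [|lra]. f_equal. f_equal. lra.
Qed.

Lemma prod_exp m n A B D :
  (forall j, (j < m + n)%N -> A j = B j * exp (D j)) ->
  foldr Rmult 1 (map A (iota m n)) =
  foldr Rmult 1 (map B (iota m n)) * exp (foldr Rplus 0 (map D (iota m n))).
Proof.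
revert m; induction n as [|n IH]; intros m H.
- simpl. rewrite exp_0; ring.
- simpl. rewrite IH; [|intros j hj; apply H; rewrite -addSnnS; exact hj].
  rewrite H; [|rewrite addnS ltnS leq_addr //].
  rewrite exp_plus; ring.
Qed.

Lemma prod_pos m n A : (forall j, (j < m + n)%N -> 0 < A j) ->
  0 < foldr Rmult 1 (map A (iota m n)).
Proof.
revert m; induction n as [|n IH]; intros m H.
- simpl; lra.
- simpl. apply Rmult_lt_0_compat.
  + apply H. rewrite addnS ltnS leq_addr //.
  + apply IH. intros j hj; apply H; rewrite -addSnnS; exact hj.
Qed.

Lemma sum_lin m n c (f g h k : nat -> R) :
  foldr Rplus 0 (map (fun j => c * (f j + g j - h j) - k j) (iota m n)) =
  c * (foldr Rplus 0 (map f (iota m n)) + foldr Rplus 0 (map g (iota m n))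
       - foldr Rplus 0 (map h (iota m n))) - foldr Rplus 0 (map k (iota m n)).
Proof.
revert m; induction n as [|n IH]; intros m; simpl; [ring|]. rewrite IH; ring.
Qed.

Lemma exp_pow k d : exp d ^ k = exp (INR k * d).
Proof.
induction k as [|k IH].
- simpl. rewrite Rmult_0_l exp_0; ring.
- change (exp d ^ k.+1) with (exp d * exp d ^ k). rewrite IH S_INR -exp_plus. f_equal; ring.
Qed.

Theorem lemma5p3 (L : fieldExtType rat) (r s : nat) (sigma : nat -> L -> CC)
    (Hsigma : number_field_embeddings r s sigma)
    (aa th : nat -> R) (Hth : theta_ok r s th)
    (Hapos : forall j, (j < r + s)%N -> 0 <= aa j)
    (M : R) (HM : 0 < M) (l : nat)
    (g : nat -> M2) (Hg : in_G r s g) (Hx : in_X_lt r s sigma g M)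
    (v : vec) (Hv : in_Lambda r s sigma g v) (Hv0 : vec_nonzero (r + s) v)
    (Hn : forall n, (1 <= n)%N -> (n <= l.+1)%N ->
            vnorm r s (vpow v (a_elt aa th) n) <= / M)
    (sv : nat -> ER)
    (Hs : forall j, (j < r + s)%N -> s_spec (Cmod (v j).1) (Cmod (v j).2) (sv j)) :
  (INR l + 1) *
    ( rsum (r + s) (fun j => if in_Lset (sv j) then aa j * INR (delta r j) else 0)
    + rsum (r + s) (fun j => if in_Cset ((INR l + 1) * aa j) (sv j)
                             then aa j * INR (delta r j) else 0)
    - rsum (r + s) (fun j => if in_Rset ((INR l + 1) * aa j) (sv j)
                             then aa j * INR (delta r j) else 0))
  < 2 * rsum (r + s) (fun j => if in_Cset ((INR l + 1) * aa j) (sv j)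
                               then ER_val (sv j) * INR (delta r j) else 0).
Proof.
set T := INR l + 1.
assert (hT : 0 < T) by (unfold T; pose proof (pos_INR l); lra).
set D := fun j => T / 2 * ((if in_Lset (sv j) then aa j * INR (delta r j) else 0)
   + (if in_Cset (T * aa j) (sv j) then aa j * INR (delta r j) else 0)
   - (if in_Rset (T * aa j) (sv j) then aa j * INR (delta r j) else 0))
   - (if in_Cset (T * aa j) (sv j) then ER_val (sv j) * INR (delta r j) else 0).
assert (Hprod : vnorm r s (vpow v (a_elt aa th) l.+1) = vnorm r s v * exp (rsum (r + s) D)).
{ unfold vnorm, rprod, rsum. rewrite -(add0n (r + s)%N).
  apply prod_exp. rewrite add0n. intros j hj.
  unfold pnorm. destruct (vpow_mod v aa th l.+1 j) as [E1 E2]. rewrite E1 E2 S_INR.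
  fold T. replace (T * aa j / 2) with (T * aa j / 2) by reflexivity.
  rewrite (step_j _ _ _ _ (sv j)); try apply Cmod_ge0; auto.
  rewrite Rpow_mult_distr exp_pow. f_equal. f_equal. unfold D.
  destruct (in_Lset (sv j)); destruct (in_Cset (T * aa j) (sv j));
   destruct (in_Rset (T * aa j) (sv j)); ring. }
assert (Hpos : 0 < vnorm r s v).
{ unfold vnorm, rprod. rewrite -(add0n (r + s)%N). apply prod_pos. rewrite add0n.
  intros j hj. apply pow_lt. unfold pnorm.
  pose proof (Hs j hj) as Hsj; destruct (sv j); destruct Hsj as [hc1 hc2].
  - eapply Rlt_le_trans; [exact hc1|apply Rmax_l].
  - eapply Rlt_le_trans; [exact hc2|apply Rmax_r].
  - eapply Rlt_le_trans; [exact hc1|apply Rmax_l]. }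
assert (Hlow : / M < vnorm r s v).
{ destruct Hx as [h [[_ Hall] hM]]. specialize (Hall v Hv Hv0).
  assert (H1 : / vnorm r s v < M) by lra.
  rewrite <- (Rinv_inv (vnorm r s v)). apply Rinv_lt_contravar; auto.
  apply Rmult_lt_0_compat; auto. now apply Rinv_0_lt_compat. }
assert (Hup := Hn l.+1 (ltn0Sn l) (leqnn _)). rewrite Hprod in Hup.
assert (HS : rsum (r + s) D < 0).
{ destruct (Rlt_or_le (rsum (r + s) D) 0) as [h|h]; auto.
  assert (1 <= exp (rsum (r + s) D)) by (rewrite <- exp_0; now apply exple). nra. }
unfold D, rsum in HS. rewrite sum_lin in HS. unfold rsum. fold T. nra.
Qed.
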